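(* Let $G=(V,E)$ be an event graph. There exists a unique sink component $\mathcal C$ of $\mathrm{dec}(G)$ such that for every $v\in V$, $\mathcal C$ is the only sink component of $\mathrm{dec}(G)$ that is reachable (by a directed walk) from the node $(v,\emptyset)$.
   Context: An event graph is a finite, connected, undirected graph $G=(V,E)$, with $n=|V|$, in which every node $v$ carries a label that is either $\mathtt{i}x_v$ (insertion of $x_v$) or $\mathtt{d}x_v$ (deletion of $x_v$), where $x_v$ is an element of a finite universe $\mathcal U$. Write $\mathcal U_{|V}=\{x_v : v\in V\}$. It is assumed that for each $x\in\mathcal U_{|V}$ at least one node is labeled $\mathtt{i}x$ and at least one node is labeled $\mathtt{d}x$. The decorated graph $\mathrm{dec}(G)$ is the directed graph with vertex set $V\times 2^{\mathcal U_{|V}}$ in which $((u,X),(v,Y))$ is an edge if and only if $\{u,v\}\in E$ and $Y=X\cup\{x_v\}$ when $v$ is labeled $\mathtt{i}x_v$, respectively $Y=X\setminus\{x_v\}$ when $v$ is labeled $\mathtt{d}x_v$. A sink component of $\mathrm{dec}(G)$ is a strongly connected component of $\mathrm{dec}(G)$ from which no edge leads to a different strongly connected component. *)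

(* Defs.v *)
From mathcomp Require Import all_boot.
Set Implicit Arguments. Unset Strict Implicit. Unset Printing Implicit Defensive.

Section EventGraph.
Variables (V U : finType) (e : rel V) (ins : V -> bool) (x : V -> U).

Definition UV : {set U} := [set x v | v in V].

Definition dnode := {p : V * {set U} | p.2 \subset UV}.

Definition upd (v : V) (X : {set U}) : {set U} :=
  if ins v then x v |: X else X :\ x v.

Definition dec_edge : rel dnode :=
  fun p q => e (val p).1 (val q).1 && ((val q).2 == upd (val q).1 (val p).2).

Definition dreach (p q : dnode) : bool := connect dec_edge p q.

Definition is_scc (C : {set dnode}) : Prop :=
  exists a : dnode, C = [set b | dreach a b && dreach b a].

Definition is_sink (C : {set dnode}) : Prop :=
  is_scc C /\ forall a b : dnode, a \in C -> dec_edge a b -> b \in C.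

Definition start (v : V) : dnode := exist _ (v, set0) (sub0set UV).

Definition reachable_from (v : V) (C : {set dnode}) : Prop :=
  exists2 c, c \in C & dreach (start v) c.

End EventGraph.

(* Main.v *)
Require Import Defs.
From mathcomp Require Import all_boot.

Lemma upd_sub {V U : finType} (ins : V -> bool) (x : V -> U) (w : V) (X : {set U}) :
  X \subset UV x -> upd ins x w X \subset UV x.
Proof.
move=> hX; rewrite /upd; case: (ins w).
  by rewrite subUset sub1set hX andbT; apply/imsetP; exists w.
by apply: subset_trans hX; apply: subD1set.
Qed.

Definition dstep {V U : finType} (ins : V -> bool) {x : V -> U} (a : dnode x) (w : V) : dnode x :=
  exist _ (w, upd ins x w (val a).2) (upd_sub ins x w _ (valP a)).

Lemma dstep_val {V U : finType} (ins : V -> bool) (x : V -> U) (p : seq V) (a : dnode x) :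
  val (foldl (dstep ins) a p) = (last (val a).1 p, foldl (fun X w => upd ins x w X) (val a).2 p).
Proof. elim: p a => [|w p IH] a; first by case: a => [[v X] ?]. by rewrite /= IH. Qed.

Lemma dstep_reach {V U : finType} (e : rel V) (ins : V -> bool) (x : V -> U) (p : seq V) (a : dnode x) :
  path e (val a).1 p -> dreach e ins a (foldl (dstep ins) a p).
Proof.
elim: p a => [|w p IH] a /=; first by rewrite /dreach connect0.
case/andP=> hw hp; apply: (connect_trans (y := dstep ins a w)).
  by apply: connect1; rewrite /dec_edge /= hw eqxx.
exact: IH.
Qed.

Lemma foldl_upd_mem {V U : finType} (ins : V -> bool) (x : V -> U) (p : seq V) (X Y : {set U}) (y : U) :
  ((y \in X) == (y \in Y)) || has (fun w => x w == y) p ->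
  (y \in foldl (fun X w => upd ins x w X) X p) = (y \in foldl (fun X w => upd ins x w X) Y p).
Proof.
elim: p X Y => [|w p IH] X Y /=; first by rewrite orbF => /eqP.
move=> h; apply: IH; rewrite /upd.
case: (eqVneq (x w) y) => [<-|hne].
  by case: (ins w); rewrite ?in_setU1 ?in_setD1 eqxx.
have -> : (y \in (if ins w then x w |: X else X :\ x w)) = (y \in X).
  by case: (ins w); rewrite ?in_setU1 ?in_setD1 eq_sym (negbTE hne).
have -> : (y \in (if ins w then x w |: Y else Y :\ x w)) = (y \in Y).
  by case: (ins w); rewrite ?in_setU1 ?in_setD1 eq_sym (negbTE hne).
by move: h; rewrite (negbTE hne).
Qed.

Lemma cover {V : finType} {e : rel V} (e_conn : forall u v : V, connect e u v) (s : seq V) (z : V) :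
  exists p, path e z p /\ all (fun u => u \in z :: p) s.
Proof.
elim: s z => [|u s IH] z; first by exists [::].
have /connectP [q hq hu] := e_conn z u.
have [p2 [hp2 hall]] := IH u.
exists (q ++ p2); split; first by rewrite cat_path hq -hu hp2.
have hu' : u \in z :: q by rewrite hu mem_last.
have hsub : forall t, t \in u :: p2 -> t \in z :: q ++ p2.
  move=> t; rewrite -cat_cons mem_cat inE => /orP [/eqP ->|ht].
    by rewrite hu'.
  by rewrite ht orbT.
rewrite /= hsub ?mem_head //=.
by apply/allP => t /(allP hall) /hsub.
Qed.

Lemma sink_closed {V U : finType} {e : rel V} {ins : V -> bool} {x : V -> U} {C : {set dnode x}} {b d} :
  is_sink e ins C -> b \in C -> dreach e ins b d -> d \in C.
Proof.
move=> [_ hC] hb /connectP [p hp ->].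
elim: p b hb hp => [|w p IH] b hb //= /andP [h1 h2].
exact: (IH w (hC _ _ hb h1) h2).
Qed.

Theorem mainTheorem2 (V U : finType) (e : rel V) (ins : V -> bool) (x : V -> U)
  (v0 : V)
  (e_sym : symmetric e) (e_irr : irreflexive e)
  (e_conn : forall u v : V, connect e u v)
  (hins : forall v : V, exists u : V, x u = x v /\ ins u)
  (hdel : forall v : V, exists u : V, x u = x v /\ ~~ ins u) :
  exists! C : {set dnode x},
    is_sink e ins C /\
    forall v : V, reachable_from e ins v C /\
      forall C' : {set dnode x}, is_sink e ins C' -> reachable_from e ins v C' -> C' = C.
Proof.
have [w1 hw1] : exists w1, e v0 w1.
  have [u1 [_ h1]] := hins v0; have [u2 [_ h2]] := hdel v0.
  have [u hu] : exists u, u != v0.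
    case: (eqVneq u1 v0) => [e1|]; last by exists u1.
    exists u2; apply/eqP => e2; move: h2; rewrite e2 -e1 h1.
    by [].
  have /connectP [q hq hl] := e_conn v0 u.
  case: q hq hl => [|w q] /=; first by move=> _ hl; rewrite hl eqxx in hu.
  by case/andP=> h _ _; exists w.
have [p' [hp' hall]] := cover e_conn (enum V) w1.
have [p [hpath hcov]] : exists p, path e v0 p /\ forall u, u \in p.
  exists (w1 :: p'); split; first by rewrite /= hw1 hp'.
  by move=> u; exact: (allP hall u (mem_enum _ u)).
have key : forall X Y : {set U}, X \subset UV x -> Y \subset UV x ->
    foldl (fun X w => upd ins x w X) X p = foldl (fun X w => upd ins x w X) Y p.
  move=> X Y hX hY; apply/setP => y; apply: foldl_upd_mem.
  case: (boolP (y \in UV x)) => hy.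
    case/imsetP: hy => w _ ->; apply/orP; right.
    by apply/hasP; exists w.
  apply/orP; left.
  have -> : (y \in X) = false by apply/negbTE; apply: contra hy; apply: (subsetP hX).
  have -> : (y \in Y) = false by apply/negbTE; apply: contra hy; apply: (subsetP hY).
  by [].
set c := foldl (dstep ins) (start x v0) p.
have univ : forall a : dnode x, dreach e ins a c.
  move=> a.
  have /connectP [q hq hl] := e_conn (val a).1 v0.
  set b := foldl (dstep ins) a q.
  have hb : (val b).1 = v0 by rewrite /b dstep_val /= hl.
  apply: (connect_trans (dstep_reach e ins x q a hq)).
  have -> : c = foldl (dstep ins) b p.
    apply: val_inj; rewrite /c (dstep_val ins x p b) (dstep_val ins x p (start x v0)) hb.
    by rewrite (key _ _ (valP b) (sub0set _)).
  by apply: dstep_reach; rewrite hb.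
set C := [set b | dreach e ins c b && dreach e ins b c].
have hcC : c \in C by rewrite inE /dreach connect0.
have sinkC : is_sink e ins C.
  split; first by exists c.
  move=> a b; rewrite !inE => /andP [h1 _] hab; rewrite univ andbT.
  exact: connect_trans h1 (connect1 hab).
have uniqC : forall C', is_sink e ins C' -> forall v, reachable_from e ins v C' -> C' = C.
  move=> C' hs v [c' hc' _].
  have hc : c \in C' := sink_closed hs hc' (univ c').
  move: hc; case: (hs) => [[a ->] _]; rewrite inE => /andP [hac hca].
  apply/setP => b; rewrite !inE.
  rewrite /dreach in hac hca *; apply/idP/idP => /andP [h1 h2].
    by rewrite (connect_trans hca h1) (connect_trans h2 hac).
  by rewrite (connect_trans hac h1) (connect_trans h2 hca).
exists C; split.
  split => // v; split; last by move=> C' hs hr; exact: uniqC hs v hr.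
  by exists c.
move=> C'' [hs'' hall''].
have [hr _] := hall'' v0.
by apply/esym/(uniqC _ hs'' v0 hr).
Qed.
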